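(* Suppose $0<\epsilon\le 1$. Then the probability measure $\pi$ on $\mathcal{A}=\{A\subset\mathcal{E}\}$ defined in the context is stochastically dominated (with respect to inclusion) by independent Bernoulli bond percolation on $\mathcal{E}$ in which each edge $\{x,y\}$ is open with probability $2\epsilon J_{x,y}$. More precisely, for every $D\subset\mathcal{E}$ and every edge $e=\{x,y\}\in\mathcal{E}\setminus D$, \[ \pi(D\cup\{e\})\le 2\epsilon J_{x,y}\,\pi(D). \]
   Context: Setting: angles $\theta_u\in[0,2\pi)$, $u\in\mathbb{Z}^2$; couplings $J_{u,v}=J_{u-v}\ge0$ with $J_x=J_{-x}$, $\sum_xJ_x=1$. Fix $M\ge1$, $\Lambda=\{-M,\dots,M\}^2$, a boundary condition $\bar\theta$ (configurations satisfy $\theta_y=\bar\theta_y$ for $y\notin\Lambda$), and let $\mathcal{E}$ be the set of unordered pairs $\{u,v\}$ of distinct vertices meeting $\Lambda$. The interaction is written $f=\tilde f+\bar\epsilon$ where $\tilde f(t)=\sum_{k=1}^K c_k\cos(kt)$ is a trigonometric polynomial and $\bar\epsilon$ is a continuous $2\pi$-periodic function with $0\le\bar\epsilon\le\epsilon$. For $A\subset\mathcal{E}$ set \[ Z_A=\int\exp\Bigl\{\sum_{\{u,v\}\in\mathcal{E}}J_{u,v}\tilde f(\theta_u-\theta_v)\Bigr\}\prod_{\{u,v\}\in A}\bigl(e^{J_{u,v}\bar\epsilon(\theta_u-\theta_v)}-1\bigr)\,\prod_{u\in\Lambda}d\theta_u, \] $Z=\sum_{A\subset\mathcal{E}}Z_A$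 (which equals the partition function with interaction $f$), and $\pi(A)=Z_A/Z$. *)

(* Defs.v *)
From Stdlib Require Import Reals Lra Lia ZArith List Classical ClassicalEpsilon.
Import ListNotations.
Open Scope R_scope.

Definition V := (Z * Z)%type.

Definition veqb (u w : V) : bool :=
  (Z.eqb (fst u) (fst w) && Z.eqb (snd u) (snd w))%bool.

Definition vsub (u w : V) : V := ((fst u - fst w)%Z, (snd u - snd w)%Z).
Definition vopp (u : V) : V := ((- fst u)%Z, (- snd u)%Z).

Definition lsum {A : Type} (l : list A) (g : A -> R) : R :=
  fold_right (fun x acc => g x + acc) 0 l.
Definition lprod {A : Type} (l : list A) (g : A -> R) : R :=
  fold_right (fun x acc => g x * acc) 1 l.

Definition zrange (n : nat) : list Z :=
  map (fun k => (Z.of_nat k - Z.of_nat n)%Z) (seq 0 (2 * n + 1)).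
Definition box (n : nat) : list V := list_prod (zrange n) (zrange n).

Definition inLam (M : nat) (u : V) : bool :=
  ((Z.abs (fst u) <=? Z.of_nat M)%Z && (Z.abs (snd u) <=? Z.of_nat M)%Z)%bool.

(* sum over Z^2 of a family, as the limit of box partial sums
   (0 by convention if no limit exists) *)
Definition zsum (g : V -> R) : R :=
  epsilon (inhabits 0) (fun l => Un_cv (fun n => lsum (box n) g) l).

(* integral over [0, 2 pi] (Riemann; 0 by convention if not integrable) *)
Definition integral02pi (g : R -> R) : R :=
  match excluded_middle_informative (inhabited (Riemann_integrable g 0 (2 * PI))) with
  | left H => RiemannInt (epsilon H (fun _ => True))
  | right _ => 0
  end.

Definition update (th : V -> R) (u : V) (t : R) : V -> R :=
  fun w => if veqb w u then t else th w.

(* iterated integral over the angles at the sites in [sites], the other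
   angles being given by [th] *)
Fixpoint iint (sites : list V) (F : (V -> R) -> R) (th : V -> R) : R :=
  match sites with
  | [] => F th
  | u :: rest => integral02pi (fun t => iint rest F (update th u t))
  end.

(* integral over [0,2pi]^Lambda with boundary condition thbar *)
Definition integrate (M : nat) (thbar : V -> R) (F : (V -> R) -> R) : R :=
  iint (box M) F thbar.

Definition trigpoly (K : nat) (c : nat -> R) (t : R) : R :=
  lsum (seq 1 K) (fun k => c k * cos (INR k * t)).

(* Sum over unordered pairs {u,v} of distinct vertices meeting Lambda of
   J_{u-v} g(u,v): each pair with one endpoint u in Lambda is counted once
   with orientation (u,v); a pair with both endpoints in Lambda is counted
   as half the sum of both orientations. *)
Definition edge_sum (J : V -> R) (M : nat) (g : V -> V -> R) : R :=
  lsum (box M) (fun u =>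
    zsum (fun v =>
      if veqb v u then 0
      else (if inLam M v then / 2 else 1) * J (vsub u v) * g u v)).

Definition Hft (J : V -> R) (M : nat) (K : nat) (c : nat -> R) (th : V -> R) : R :=
  edge_sum J M (fun u v => trigpoly K c (th u - th v)).

(* Edges: (u,v) with u <> v and u or v in Lambda; unordered: lists of
   edges are considered modulo orientation *)
Definition is_edge (M : nat) (e : V * V) : Prop :=
  fst e <> snd e /\ (inLam M (fst e) = true \/ inLam M (snd e) = true).

Definition same_edge (e d : V * V) : Prop :=
  d = e \/ d = (snd e, fst e).

(* a finite set D of edges, represented by a list without repetitions
   (modulo orientation) *)
Fixpoint edge_set (M : nat) (D : list (V * V)) : Prop :=
  match D with
  | [] => True
  | e :: D' => is_edge M e /\ (forall d, In d D' -> ~ same_edge e d) /\ edge_set M D'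
  end.

Definition ZA (J : V -> R) (M : nat) (thbar : V -> R) (K : nat) (c : nat -> R)
  (epsbar : R -> R) (A : list (V * V)) : R :=
  integrate M thbar (fun th =>
    exp (Hft J M K c th) *
    lprod A (fun e => exp (J (vsub (fst e) (snd e)) * epsbar (th (fst e) - th (snd e))) - 1)).

(* Z = partition function with interaction f = ft + epsbar
   (= sum_A Z_A by expanding exp(J epsbar) = 1 + (exp(J epsbar) - 1)) *)
Definition Zpart (J : V -> R) (M : nat) (thbar : V -> R) (K : nat) (c : nat -> R)
  (epsbar : R -> R) : R :=
  integrate M thbar (fun th =>
    exp (edge_sum J M (fun u v => trigpoly K c (th u - th v) + epsbar (th u - th v)))).

Definition piA (J : V -> R) (M : nat) (thbar : V -> R) (K : nat) (c : nat -> R)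
  (epsbar : R -> R) (A : list (V * V)) : R :=
  ZA J M thbar K c epsbar A / Zpart J M thbar K c epsbar.

(* Main.v *)
Require Import Defs.
From Stdlib Require Import Reals ZArith List Lra Lia Permutation Classical ClassicalEpsilon FunctionalExtensionality.
From Coquelicot Require Import Coquelicot.
Import ListNotations.
Open Scope R_scope.

Lemma lsum_nil {A} (h : A -> R) : lsum [] h = 0.
Proof. reflexivity. Qed.
Lemma lsum_cons {A} (a : A) l h : lsum (a :: l) h = h a + lsum l h.
Proof. reflexivity. Qed.

Lemma lsum_app {A} (l1 l2 : list A) h : lsum (l1 ++ l2) h = lsum l1 h + lsum l2 h.
Proof. induction l1; simpl; [lra|]. unfold lsum in *; simpl. rewrite IHl1. lra. Qed.

Lemma lsum_perm {A} (l l' : list A) h : Permutation l l' -> lsum l h = lsum l' h.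
Proof. induction 1; unfold lsum in *; simpl in *; lra. Qed.

Lemma lsum_map {A B} (f : A -> B) l h : lsum (map f l) h = lsum l (fun x => h (f x)).
Proof. induction l; unfold lsum in *; simpl; [lra|]. rewrite IHl. lra. Qed.

Lemma lsum_ext {A} (l : list A) f g : (forall x, In x l -> f x = g x) -> lsum l f = lsum l g.
Proof. induction l; intros H; unfold lsum in *; simpl; [lra|].
  rewrite H by (left; auto). rewrite IHl by (intros; apply H; right; auto). lra. Qed.

Lemma lsum_le {A} (l : list A) f g : (forall x, In x l -> f x <= g x) -> lsum l f <= lsum l g.
Proof. induction l; intros H; unfold lsum in *; simpl; [lra|].
  assert (f a <= g a) by (apply H; left; auto).
  assert (fold_right (fun x acc => f x + acc) 0 l <= fold_right (fun x acc => g x + acc) 0 l)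
   by (apply IHl; intros; apply H; right; auto). lra. Qed.

Lemma lsum_minus {A} (l : list A) f g : lsum l (fun x => f x - g x) = lsum l f - lsum l g.
Proof. induction l; unfold lsum in *; simpl; [lra|]. rewrite IHl. lra. Qed.

Lemma lsum_scal {A} (l : list A) f k : lsum l (fun x => k * f x) = k * lsum l f.
Proof. induction l; unfold lsum in *; simpl; [lra|]. rewrite IHl. lra. Qed.

Lemma lsum_abs {A} (l : list A) f : Rabs (lsum l f) <= lsum l (fun x => Rabs (f x)).
Proof. induction l; unfold lsum in *; simpl. rewrite Rabs_R0; lra.
  eapply Rle_trans; [apply Rabs_triang|]. lra. Qed.

Lemma lsum_const {A} (l : list A) k : lsum l (fun _ => k) = INR (length l) * k.
Proof. induction l; unfold lsum in *; simpl length. simpl; lra.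
  rewrite S_INR. simpl. rewrite IHl. lra. Qed.

Lemma lsum_nonneg {A} (l : list A) f : (forall x, In x l -> 0 <= f x) -> 0 <= lsum l f.
Proof. induction l; intros H; unfold lsum in *; simpl; [lra|].
  assert (0 <= f a) by (apply H; left; auto).
  assert (0 <= fold_right (fun x acc => f x + acc) 0 l) by (apply IHl; intros; apply H; right; auto). lra. Qed.

Lemma lsum_le_incl {A} (L l : list A) h :
  NoDup l -> incl l L -> (forall x, In x L -> 0 <= h x) -> lsum l h <= lsum L h.
Proof.
  revert l. induction L as [|a L IH]; intros l Hnd Hinc Hpos.
  - destruct l as [|b l]; [simpl; lra|]. exfalso; apply (Hinc b); left; auto.
  - destruct (classic (In a l)) as [Ha|Ha].
    + destruct (in_split _ _ Ha) as [l1 [l2 ->]].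
      rewrite (lsum_perm _ (a :: l1 ++ l2)) by (symmetry; apply Permutation_middle).
      rewrite !lsum_cons.
      destruct (NoDup_remove _ _ _ Hnd) as [Hnd' Hna].
      assert (lsum (l1 ++ l2) h <= lsum L h); [|lra].
      apply IH; auto.
      * intros z Hz. assert (Hz' : In z (l1 ++ a :: l2)).
        { apply in_app_or in Hz; apply in_or_app; destruct Hz; [left|right;right]; auto. }
        destruct (Hinc z Hz') as [E|E]; auto. subst. contradiction.
      * intros; apply Hpos; right; auto.
    + rewrite lsum_cons.
      assert (lsum l h <= lsum L h).
      { apply IH; auto. intros z Hz. destruct (Hinc z Hz) as [E|E]; auto. subst; contradiction.
        intros; apply Hpos; right; auto. }
      assert (0 <= h a) by (apply Hpos; left; auto). lra.
Qed.

Lemma in_zrange n z : In z (zrange n) <-> (- Z.of_nat n <= z <= Z.of_nat n)%Z.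
Proof.
  unfold zrange. rewrite in_map_iff. split.
  - intros [k [<- Hk]]. apply in_seq in Hk. lia.
  - intros Hz. exists (Z.to_nat (z + Z.of_nat n)). split. lia. apply in_seq. lia.
Qed.

Lemma nodup_zrange n : NoDup (zrange n).
Proof. unfold zrange. apply FinFun.Injective_map_NoDup. intros a b H. lia. apply seq_NoDup. Qed.

Lemma in_box n (v : V) : In v (box n) <-> (Z.abs (fst v) <= Z.of_nat n /\ Z.abs (snd v) <= Z.of_nat n)%Z.
Proof. destruct v as [a b]. unfold box. rewrite (in_prod_iff (zrange n) (zrange n) a b), !in_zrange. simpl. lia. Qed.

Lemma nodup_prod {A B} (l : list A) (l' : list B) : NoDup l -> NoDup l' -> NoDup (list_prod l l').
Proof.
  induction l as [|a l IH]; intros H1 H2; simpl. constructor.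
  inversion H1; subst. apply NoDup_app.
  - apply FinFun.Injective_map_NoDup; auto. intros x y E; injection E; auto.
  - apply IH; auto.
  - intros [p q] Hin Hin2. apply in_map_iff in Hin. destruct Hin as [z [E _]]. injection E; intros; subst.
    apply in_prod_iff in Hin2. tauto.
Qed.

Lemma nodup_box n : NoDup (box n).
Proof. apply nodup_prod; apply nodup_zrange. Qed.

Lemma inLam_box M u : inLam M u = true <-> In u (box M).
Proof. rewrite in_box. unfold inLam. rewrite Bool.andb_true_iff, !Z.leb_le. tauto. Qed.

Lemma Sn_growing (J : V -> R) : (forall x, 0 <= J x) -> Un_growing (fun n => lsum (box n) J).
Proof. intros HJ n. apply lsum_le_incl; auto using nodup_box.
  intros v. rewrite !in_box. lia. Qed.

Lemma Sn_le1 (J : V -> R) : (forall x, 0 <= J x) -> Un_cv (fun n => lsum (box n) J) 1 ->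
  forall n, lsum (box n) J <= 1.
Proof. intros HJ Hc n. apply (growing_ineq (fun n => lsum (box n) J) 1); auto using Sn_growing. Qed.

Lemma Jshift_le (J : V -> R) M u n : (forall x, 0 <= J x) -> Un_cv (fun n => lsum (box n) J) 1 ->
  In u (box M) -> lsum (box n) (fun v => J (vsub u v)) <= 1.
Proof.
  intros HJ Hcv Hu. rewrite <- (lsum_map (vsub u)).
  eapply Rle_trans; [|apply (Sn_le1 J HJ Hcv (n + M))].
  apply lsum_le_incl; auto.
  - apply FinFun.Injective_map_NoDup; [|apply nodup_box].
    intros [a b] [c d] E. unfold vsub in E; simpl in E. injection E; intros. f_equal; lia.
  - intros w Hw. apply in_map_iff in Hw. destruct Hw as [v [<- Hv]].
    rewrite in_box in *. unfold vsub; simpl. lia.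
Qed.

Lemma cv_bound (u : nat -> R) l B : Un_cv u l -> (forall n, Rabs (u n) <= B) -> Rabs l <= B.
Proof.
  intros Hcv Hb. destruct (Rle_dec (Rabs l) B) as [|Hn]; auto. exfalso.
  destruct (Hcv (Rabs l - B)) as [N HN]. lra.
  specialize (HN N (le_n N)). unfold R_dist in HN.
  assert (Rabs l <= Rabs (u N) + Rabs (l - u N)).
  { replace l with (u N + (l - u N)) at 1 by ring. apply Rabs_triang. }
  rewrite Rabs_minus_sym in HN. specialize (Hb N). lra.
Qed.

Lemma lsum_Jbound (J : V -> R) M u n h K : (forall x, 0 <= J x) -> Un_cv (fun n => lsum (box n) J) 1 ->
  In u (box M) -> 0 <= K -> (forall v, Rabs (h v) <= K * J (vsub u v)) ->
  lsum (box n) (fun v => Rabs (h v)) <= K.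
Proof.
  intros HJ Hcv Hu HK Hh. eapply Rle_trans. apply lsum_le. intros; apply Hh.
  rewrite lsum_scal. pose proof (Jshift_le J M u n HJ Hcv Hu).
  rewrite <- (Rmult_1_r K) at 2. apply Rmult_le_compat_l; auto.
Qed.

Lemma zsum_cv (J : V -> R) M u h K : (forall x, 0 <= J x) -> Un_cv (fun n => lsum (box n) J) 1 ->
  In u (box M) -> 0 <= K -> (forall v, Rabs (h v) <= K * J (vsub u v)) ->
  Un_cv (fun n => lsum (box n) h) (zsum h).
Proof.
  intros HJ Hcv Hu HK Hh.
  assert (Hex : exists l, Un_cv (fun n => lsum (box n) h) l).
  { set (p := fun v => (Rabs (h v) + h v) / 2).
    set (q := fun v => (Rabs (h v) - h v) / 2).
    assert (Hp : forall v, 0 <= p v <= Rabs (h v)).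
    { intros v; unfold p. pose proof (Rle_abs (h v)). pose proof (Rabs_pos (h v)).
      pose proof (Rle_abs (- h v)). rewrite Rabs_Ropp in *. lra. }
    assert (Hq : forall v, 0 <= q v <= Rabs (h v)).
    { intros v; unfold q. pose proof (Rle_abs (h v)). pose proof (Rabs_pos (h v)).
      pose proof (Rle_abs (- h v)). rewrite Rabs_Ropp in *. lra. }
    assert (Hb : forall f, (forall v, 0 <= f v <= Rabs (h v)) -> {l | Un_cv (fun n => lsum (box n) f) l}).
    { intros f Hf. apply growing_cv.
      - intros n. apply lsum_le_incl; auto using nodup_box. intros v; rewrite !in_box; lia.
        intros; apply Hf.
      - exists K. intros x [i ->]. eapply Rle_trans; [|apply (lsum_Jbound J M u i h K); auto].
        apply lsum_le; intros; apply Hf. }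
    destruct (Hb p Hp) as [lp Hlp]. destruct (Hb q Hq) as [lq Hlq].
    exists (lp - lq).
    replace (fun n => lsum (box n) h) with (fun n => lsum (box n) p - lsum (box n) q).
    apply CV_minus; auto.
    apply functional_extensionality; intros n. rewrite <- lsum_minus. apply lsum_ext.
    intros; unfold p, q; field. }
  unfold zsum. exact (epsilon_spec (inhabits 0) _ Hex).
Qed.

Lemma zsum_bound (J : V -> R) M u h K : (forall x, 0 <= J x) -> Un_cv (fun n => lsum (box n) J) 1 ->
  In u (box M) -> 0 <= K -> (forall v, Rabs (h v) <= K * J (vsub u v)) ->
  Rabs (zsum h) <= K.
Proof.
  intros HJ Hcv Hu HK Hh. apply (cv_bound _ _ _ (zsum_cv J M u h K HJ Hcv Hu HK Hh)).
  intros n. eapply Rle_trans. apply lsum_abs. apply (lsum_Jbound J M u n h K); auto.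
Qed.

Lemma zsum_diff (J : V -> R) M u h1 h2 K1 K2 K : (forall x, 0 <= J x) -> Un_cv (fun n => lsum (box n) J) 1 ->
  In u (box M) -> 0 <= K1 -> 0 <= K2 -> 0 <= K ->
  (forall v, Rabs (h1 v) <= K1 * J (vsub u v)) ->
  (forall v, Rabs (h2 v) <= K2 * J (vsub u v)) ->
  (forall v, Rabs (h1 v - h2 v) <= K * J (vsub u v)) ->
  Rabs (zsum h1 - zsum h2) <= K.
Proof.
  intros HJ Hcv Hu HK1 HK2 HK H1 H2 H.
  pose proof (CV_minus _ _ _ _ (zsum_cv J M u h1 K1 HJ Hcv Hu HK1 H1) (zsum_cv J M u h2 K2 HJ Hcv Hu HK2 H2)) as Hc.
  apply (cv_bound _ _ _ Hc). intros n. rewrite <- lsum_minus.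
  eapply Rle_trans. apply lsum_abs. apply (lsum_Jbound J M u n (fun v => h1 v - h2 v) K); auto.
Qed.

Definition UCc (F : (V -> R) -> R) : Prop :=
  forall w eps, 0 < eps -> exists del, 0 < del /\ forall th t1 t2,
    Rabs (t1 - t2) < del -> Rabs (F (update th w t1) - F (update th w t2)) < eps.

Lemma veqb_iff a b : veqb a b = true <-> a = b.
Proof. destruct a, b; unfold veqb; simpl. rewrite Bool.andb_true_iff, !Z.eqb_eq.
  split. intros [-> ->]; auto. intros E; injection E; auto. Qed.

Lemma veqb_refl a : veqb a a = true.
Proof. apply veqb_iff; auto. Qed.

Lemma update_same th u s t : update (update th u s) u t = update th u t.
Proof. apply functional_extensionality; intros z. unfold update. destruct (veqb z u); auto. Qed.

Lemma update_comm th u w s t : w <> u -> update (update th w s) u t = update (update th u t) w s.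
Proof. intros Hne. apply functional_extensionality; intros z. unfold update.
  destruct (veqb z u) eqn:E1; destruct (veqb z w) eqn:E2; auto.
  apply veqb_iff in E1; apply veqb_iff in E2. subst. contradiction. Qed.

Lemma UC_cont (f : R -> R) : (forall eps, 0 < eps -> exists del, 0 < del /\
  forall a b, Rabs (a - b) < del -> Rabs (f a - f b) < eps) -> continuity f.
Proof. intros H x. unfold continuity_pt, continue_in, limit1_in, limit_in. intros eps Heps.
  destruct (H eps Heps) as [d [Hd Hf]]. exists d; split; auto. intros y [_ Hy].
  simpl in *. unfold R_dist in *. apply Hf; auto. Qed.

Lemma PI2_pos : 0 < 2 * PI.
Proof. pose proof PI_RGT_0. lra. Qed.

Lemma int_RInt f : continuity f -> integral02pi f = RInt f 0 (2 * PI).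
Proof.
  intros Hc. unfold integral02pi. destruct (excluded_middle_informative _) as [H|H].
  - rewrite (RInt_Reals f 0 (2 * PI) (epsilon H (fun _ => True))). reflexivity.
  - exfalso. apply H. constructor. apply continuity_implies_RiemannInt.
    pose proof PI2_pos; lra. intros; apply Hc.
Qed.

Lemma ex_RInt_cont f : continuity f -> ex_RInt f 0 (2 * PI).
Proof. intros Hc. apply (ex_RInt_continuous (V := R_CompleteNormedModule)). intros z _. apply continuity_pt_filterlim. apply Hc. Qed.

Lemma UCc_t F th u : UCc F -> continuity (fun t => F (update th u t)).
Proof. intros H. apply UC_cont. intros eps Heps. destruct (H u eps Heps) as [d [Hd Hf]].
  exists d; split; auto. Qed.

Lemma int_ge0 g : (forall t, 0 <= g t) -> 0 <= integral02pi g.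
Proof.
  intros Hg. unfold integral02pi. destruct (excluded_middle_informative _) as [H|H]; [|lra].
  rewrite <- RInt_Reals. apply RInt_ge_0. pose proof PI2_pos; lra.
  apply ex_RInt_Reals_1. apply (epsilon H (fun _ => True)). intros; apply Hg.
Qed.

Lemma iint_ge0 sites F th : (forall th, 0 <= F th) -> 0 <= iint sites F th.
Proof. revert th; induction sites; intros th H; simpl; auto. apply int_ge0. intros; auto. Qed.

Lemma int_UC F u : UCc F -> UCc (fun th => integral02pi (fun t => F (update th u t))).
Proof.
  intros HF w eps Heps. destruct (classic (w = u)) as [->|Hne].
  - exists 1. split; [lra|]. intros th t1 t2 _.
    assert (E : forall s, (fun t => F (update (update th u s) u t)) = (fun t => F (update th u t))).
    { intros; apply functional_extensionality; intros; rewrite update_same; auto. }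
    rewrite !E. rewrite Rminus_diag, Rabs_R0. auto.
  - destruct (HF w (eps / (2 * PI + 1))) as [d [Hd Hf]].
    { apply Rdiv_lt_0_compat; auto. pose proof PI2_pos; lra. }
    exists d; split; auto. intros th t1 t2 Ht.
    rewrite !int_RInt by apply UCc_t, HF.
    match goal with |- Rabs (RInt ?f1 _ _ - RInt ?f2 _ _) < _ =>
      assert (E: RInt f1 0 (2*PI) - RInt f2 0 (2*PI) = RInt (fun t => f1 t - f2 t) 0 (2*PI))
        by (symmetry; apply (RInt_minus (V:=R_CompleteNormedModule)); apply ex_RInt_cont, UCc_t, HF);
      rewrite E end.
    eapply Rle_lt_trans. apply (abs_RInt_le_const _ 0 (2 * PI) (eps / (2 * PI + 1))).
    pose proof PI2_pos; lra.
    apply ex_RInt_cont. apply continuity_minus; apply UCc_t, HF.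
    intros t _. simpl. rewrite !(update_comm th u w) by auto.
    left. apply Hf; auto.
    replace (2 * PI - 0) with (2 * PI) by ring.
    pose proof PI2_pos.
    assert (Hq : eps / (2 * PI + 1) * (2 * PI + 1) = eps) by (field; lra).
    assert (0 < eps / (2 * PI + 1)) by (apply Rdiv_lt_0_compat; lra). nra.
Qed.

Lemma iint_UC sites F : UCc F -> UCc (iint sites F).
Proof. revert F; induction sites; intros F H; simpl; auto.
  apply (int_UC (iint sites F)). auto. Qed.

Lemma iint_mono sites F1 F2 : UCc F1 -> UCc F2 -> (forall th, F1 th <= F2 th) ->
  forall th, iint sites F1 th <= iint sites F2 th.
Proof.
  induction sites; intros H1 H2 H th; simpl; auto.
  rewrite !int_RInt by (apply UCc_t, iint_UC; auto).
  apply RInt_le. pose proof PI2_pos; lra.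
  1,2: apply ex_RInt_cont, UCc_t, iint_UC; auto.
  intros; apply IHsites; auto.
Qed.

Lemma iint_scal sites F C : UCc F -> forall th, iint sites (fun th => C * F th) th = C * iint sites F th.
Proof.
  induction sites; intros H th; simpl; auto.
  transitivity (integral02pi (fun t => C * iint sites F (update th a t))).
  { f_equal. apply functional_extensionality; intros t. apply IHsites; auto. }
  rewrite !int_RInt. 2: apply UCc_t, iint_UC; auto.
  2: { apply (continuity_scal _ C). apply UCc_t, iint_UC; auto. }
  apply (RInt_scal (V := R_CompleteNormedModule)). apply ex_RInt_cont, UCc_t, iint_UC; auto.
Qed.

Definition Good (F : (V -> R) -> R) : Prop :=
  (exists B, forall th, Rabs (F th) <= B) /\ UCc F.

Lemma exp_le' x y : x <= y -> exp x <= exp y.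
Proof. intros [H|H]. left; apply exp_increasing; auto. subst; lra. Qed.

Lemma Rabs_le_between x B : Rabs x <= B -> - B <= x <= B.
Proof. intros H. pose proof (Rle_abs x). pose proof (Rle_abs (- x)). rewrite Rabs_Ropp in *. lra. Qed.

Lemma Lip_UCc F L : (forall w th t1 t2, Rabs (F (update th w t1) - F (update th w t2)) <= L * Rabs (t1 - t2)) -> UCc F.
Proof.
  intros H w eps Heps. exists (eps / (Rabs L + 1)). split.
  apply Rdiv_lt_0_compat; auto. pose proof (Rabs_pos L); lra.
  intros th t1 t2 Ht. eapply Rle_lt_trans. apply H.
  pose proof (Rabs_pos L). pose proof (Rle_abs L). pose proof (Rabs_pos (t1 - t2)).
  assert (E : eps / (Rabs L + 1) * (Rabs L + 1) = eps) by (field; lra).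
  assert (L * Rabs (t1 - t2) <= Rabs L * Rabs (t1 - t2)) by nra.
  nra.
Qed.

Lemma Good_const c : Good (fun _ => c).
Proof. split. exists (Rabs c); intros; lra.
  intros w eps H. exists 1; split; [lra|]. intros. rewrite Rminus_diag, Rabs_R0; auto. Qed.

Lemma Good_mult F G : Good F -> Good G -> Good (fun th => F th * G th).
Proof.
  intros [[B1 HB1] U1] [[B2 HB2] U2]. split.
  - exists (B1 * B2). intros th. rewrite Rabs_mult. apply Rmult_le_compat; auto using Rabs_pos.
  - intros w eps Heps.
    assert (HB1p : 0 <= B1) by (eapply Rle_trans; [apply Rabs_pos|apply (HB1 (fun _ => 0))]).
    assert (HB2p : 0 <= B2) by (eapply Rle_trans; [apply Rabs_pos|apply (HB2 (fun _ => 0))]).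
    set (e := eps / (2 * (B1 + B2 + 1))).
    assert (He : 0 < e) by (apply Rdiv_lt_0_compat; lra).
    assert (Hee : e * (2 * (B1 + B2 + 1)) = eps) by (unfold e; field; lra).
    destruct (U1 w e He) as [d1 [Hd1 H1]]. destruct (U2 w e He) as [d2 [Hd2 H2]].
    exists (Rmin d1 d2). split. apply Rmin_glb_lt; auto.
    intros th t1 t2 Ht.
    assert (Ht1 : Rabs (t1 - t2) < d1) by (eapply Rlt_le_trans; [apply Ht|apply Rmin_l]).
    assert (Ht2 : Rabs (t1 - t2) < d2) by (eapply Rlt_le_trans; [apply Ht|apply Rmin_r]).
    specialize (H1 th t1 t2 Ht1). specialize (H2 th t1 t2 Ht2).
    set (a1 := F (update th w t1)) in *. set (a2 := F (update th w t2)) in *.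
    set (b1 := G (update th w t1)) in *. set (b2 := G (update th w t2)) in *.
    replace (a1 * b1 - a2 * b2) with (a1 * (b1 - b2) + b2 * (a1 - a2)) by ring.
    eapply Rle_lt_trans. apply Rabs_triang. rewrite !Rabs_mult.
    assert (Rabs a1 <= B1) by apply HB1. assert (Rabs b2 <= B2) by apply HB2.
    pose proof (Rabs_pos (b1 - b2)). pose proof (Rabs_pos (a1 - a2)).
    assert (Rabs a1 * Rabs (b1 - b2) <= B1 * e) by (apply Rmult_le_compat; auto using Rabs_pos; lra).
    assert (Rabs b2 * Rabs (a1 - a2) <= B2 * e) by (apply Rmult_le_compat; auto using Rabs_pos; lra).
    nra.
Qed.

Lemma Good_minus F G : Good F -> Good G -> Good (fun th => F th - G th).
Proof.
  intros [[B1 HB1] U1] [[B2 HB2] U2]. split.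
  - exists (B1 + B2). intros th. unfold Rminus. eapply Rle_trans. apply Rabs_triang.
    rewrite Rabs_Ropp. specialize (HB1 th); specialize (HB2 th); lra.
  - intros w eps Heps.
    destruct (U1 w (eps/2)) as [d1 [Hd1 H1]]. lra. destruct (U2 w (eps/2)) as [d2 [Hd2 H2]]. lra.
    exists (Rmin d1 d2). split. apply Rmin_glb_lt; auto.
    intros th t1 t2 Ht.
    assert (Ht1 : Rabs (t1 - t2) < d1) by (eapply Rlt_le_trans; [apply Ht|apply Rmin_l]).
    assert (Ht2 : Rabs (t1 - t2) < d2) by (eapply Rlt_le_trans; [apply Ht|apply Rmin_r]).
    specialize (H1 th t1 t2 Ht1). specialize (H2 th t1 t2 Ht2).
    replace (F (update th w t1) - G (update th w t1) - (F (update th w t2) - G (update th w t2)))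
      with ((F (update th w t1) - F (update th w t2)) + - (G (update th w t1) - G (update th w t2))) by ring.
    eapply Rle_lt_trans. apply Rabs_triang. rewrite Rabs_Ropp. lra.
Qed.

Lemma UCc_comp_glob (g : R -> R) F :
  (forall eps, 0 < eps -> exists del, 0 < del /\ forall a b, Rabs (a - b) < del -> Rabs (g a - g b) < eps) ->
  UCc F -> UCc (fun th => g (F th)).
Proof.
  intros Hg HF w eps Heps. destruct (Hg eps Heps) as [d [Hd H]].
  destruct (HF w d Hd) as [d' [Hd' H']]. exists d'; split; auto.
Qed.

Lemma UCc_comp_cont (g : R -> R) F B : continuity g -> (forall th, Rabs (F th) <= B) ->
  UCc F -> UCc (fun th => g (F th)).
Proof.
  intros Hg HB HF w eps Heps.
  destruct (Heine_cor2 (f:=g) (a:=-B) (b:=B) (fun x _ => Hg x) (mkposreal eps Heps)) as [d Hd].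
  destruct (HF w d (cond_pos d)) as [d' [Hd' H']]. exists d'; split; auto.
  intros th t1 t2 Ht. apply (Hd (F (update th w t1)) (F (update th w t2))).
  - apply Rabs_le_between. apply HB.
  - apply Rabs_le_between. apply HB.
  - apply H'; auto.
Qed.

Lemma Good_exp F : Good F -> Good (fun th => exp (F th)).
Proof.
  intros [[B HB] U]. split.
  - exists (exp B). intros th. rewrite Rabs_right by (left; apply exp_pos).
    apply exp_le'. specialize (HB th). apply Rabs_le_between in HB. lra.
  - apply (UCc_comp_cont exp F B); auto. intros x; apply derivable_continuous_pt, derivable_pt_exp.
Qed.

Lemma per_nat (g : R -> R) : (forall t, g (t + 2 * PI) = g t) -> forall n t, g (t + 2 * PI * INR n) = g t.
Proof. intros H n; induction n; intros t. simpl. f_equal; ring.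
  rewrite S_INR. replace (t + 2 * PI * (INR n + 1)) with ((t + 2 * PI * INR n) + 2 * PI) by ring.
  rewrite H; auto. Qed.

Lemma per_Z (g : R -> R) : (forall t, g (t + 2 * PI) = g t) -> forall k t, g (t + 2 * PI * IZR k) = g t.
Proof.
  intros H k t. destruct (Z_le_gt_dec 0 k) as [Hk|Hk].
  - replace k with (Z.of_nat (Z.to_nat k)) by lia. rewrite <- INR_IZR_INZ. apply per_nat; auto.
  - replace k with (- Z.of_nat (Z.to_nat (- k)))%Z by lia. rewrite opp_IZR, <- INR_IZR_INZ.
    set (n := Z.to_nat (-k)). rewrite <- (per_nat g H n (t + 2 * PI * - INR n)). f_equal; ring.
Qed.

Lemma reduce_2pi x : exists m, 0 <= x + 2 * PI * IZR m <= 2 * PI.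
Proof.
  pose proof PI2_pos. exists (1 - up (x / (2 * PI)))%Z. rewrite minus_IZR.
  destruct (archimed (x / (2 * PI))) as [H1 H2].
  set (r := x / (2 * PI)) in *. assert (Hx : x = 2 * PI * r) by (unfold r; field; lra).
  rewrite Hx. set (u := IZR (up r)) in *. nra.
Qed.

Lemma per_UC (g : R -> R) : continuity g -> (forall t, g (t + 2 * PI) = g t) ->
  forall eps, 0 < eps -> exists del, 0 < del /\ forall a b, Rabs (a - b) < del -> Rabs (g a - g b) < eps.
Proof.
  intros Hc Hp eps Heps. pose proof PI2_3_2.
  destruct (Heine_cor2 (f:=g) (a:=- (2 * PI)) (b:=4 * PI) (fun x _ => Hc x) (mkposreal eps Heps)) as [d Hd].
  exists (Rmin d 1). split. apply Rmin_glb_lt; [apply cond_pos|lra].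
  intros a b Hab. destruct (reduce_2pi a) as [m Hm].
  rewrite <- (per_Z g Hp m a), <- (per_Z g Hp m b).
  assert (Hd1 : Rabs (a - b) < d) by (eapply Rlt_le_trans; [apply Hab|apply Rmin_l]).
  assert (Hd2 : Rabs (a - b) < 1) by (eapply Rlt_le_trans; [apply Hab|apply Rmin_r]).
  apply Rabs_def2 in Hd2.
  apply Hd; try lra.
  replace (a + 2 * PI * IZR m - (b + 2 * PI * IZR m)) with (a - b) by ring. auto.
Qed.

Lemma upd_diff th w t1 t2 z : Rabs (update th w t1 z - update th w t2 z) <= Rabs (t1 - t2).
Proof. unfold update. destruct (veqb z w). lra. rewrite Rminus_diag, Rabs_R0. apply Rabs_pos. Qed.

Lemma diff_UCc a b : UCc (fun th => th a - th b).
Proof.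
  apply (Lip_UCc _ 2). intros w th t1 t2.
  replace (update th w t1 a - update th w t1 b - (update th w t2 a - update th w t2 b))
   with ((update th w t1 a - update th w t2 a) + - (update th w t1 b - update th w t2 b)) by ring.
  eapply Rle_trans. apply Rabs_triang. rewrite Rabs_Ropp.
  pose proof (upd_diff th w t1 t2 a). pose proof (upd_diff th w t1 t2 b). lra.
Qed.

Lemma Good_fac (Je eps : R) (epsbar : R -> R) a b : continuity epsbar ->
  (forall t, epsbar (t + 2 * PI) = epsbar t) -> (forall t, 0 <= epsbar t <= eps) ->
  Good (fun th => exp (Je * epsbar (th a - th b)) - 1).
Proof.
  intros Hc Hp Hb. apply Good_minus; [|apply Good_const]. apply Good_exp.
  apply Good_mult; [apply Good_const|]. split.
  - exists eps. intros th. specialize (Hb (th a - th b)). rewrite Rabs_right; lra.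
  - apply (UCc_comp_glob epsbar). apply per_UC; auto. apply diff_UCc.
Qed.

Lemma lip_deriv f f' L : (forall x, derivable_pt_lim f x (f' x)) -> (forall x, Rabs (f' x) <= L) ->
  forall x y, Rabs (f x - f y) <= L * Rabs (x - y).
Proof.
  intros Hd Hb x y. destruct (total_order_T x y) as [[H|H]|H].
  - destruct (MVT_cor2 f f' x y H (fun c _ => Hd c)) as [c [E _]].
    rewrite Rabs_minus_sym, E, (Rabs_minus_sym x y), Rabs_mult.
    apply Rmult_le_compat_r; auto using Rabs_pos.
  - subst. rewrite !Rminus_diag, Rabs_R0. specialize (Hb 0). pose proof (Rabs_pos (f' 0)). lra.
  - destruct (MVT_cor2 f f' y x H (fun c _ => Hd c)) as [c [E _]].
    rewrite E, Rabs_mult. apply Rmult_le_compat_r; auto using Rabs_pos.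
Qed.

Lemma cos_lip x y : Rabs (cos x - cos y) <= Rabs (x - y).
Proof.
  rewrite <- (Rmult_1_l (Rabs (x - y))). apply (lip_deriv cos (fun t => - sin t)).
  apply derivable_pt_lim_cos. intros t. rewrite Rabs_Ropp. pose proof (SIN_bound t).
  apply Rabs_le; lra.
Qed.

Definition Lc (K : nat) (c : nat -> R) := lsum (seq 1 K) (fun k => Rabs (c k) * INR k).
Definition Bc (K : nat) (c : nat -> R) := lsum (seq 1 K) (fun k => Rabs (c k)).

Lemma Lc_pos K c : 0 <= Lc K c.
Proof. apply lsum_nonneg. intros. apply Rmult_le_pos; auto using Rabs_pos, pos_INR. Qed.
Lemma Bc_pos K c : 0 <= Bc K c.
Proof. apply lsum_nonneg. intros. apply Rabs_pos. Qed.

Lemma trig_lip K c a b : Rabs (trigpoly K c a - trigpoly K c b) <= Lc K c * Rabs (a - b).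
Proof.
  unfold trigpoly, Lc. rewrite <- lsum_minus, Rmult_comm, <- lsum_scal.
  eapply Rle_trans. apply lsum_abs. apply lsum_le. intros k _.
  replace (c k * cos (INR k * a) - c k * cos (INR k * b)) with (c k * (cos (INR k * a) - cos (INR k * b))) by ring.
  rewrite Rabs_mult. pose proof (cos_lip (INR k * a) (INR k * b)).
  replace (INR k * a - INR k * b) with (INR k * (a - b)) in H by ring.
  rewrite Rabs_mult, (Rabs_right (INR k)) in H by (apply Rle_ge, pos_INR).
  pose proof (Rabs_pos (c k)). nra.
Qed.

Lemma trig_bound K c t : Rabs (trigpoly K c t) <= Bc K c.
Proof.
  unfold trigpoly, Bc. eapply Rle_trans. apply lsum_abs. apply lsum_le. intros k _.
  rewrite Rabs_mult. pose proof (COS_bound (INR k * t)). pose proof (Rabs_pos (c k)).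
  assert (Rabs (cos (INR k * t)) <= 1) by (apply Rabs_le; lra). nra.
Qed.

Definition gg (J : V -> R) M K c (th : V -> R) u v :=
  if veqb v u then 0 else (if inLam M v then / 2 else 1) * J (vsub u v) * trigpoly K c (th u - th v).

Lemma Hft_eq J M K c th : Hft J M K c th = lsum (box M) (fun u => zsum (gg J M K c th u)).
Proof. reflexivity. Qed.

Lemma wt_bound M v : 0 <= (if inLam M v then / 2 else 1) <= 1.
Proof. destruct (inLam M v); lra. Qed.

Lemma gg_bound J M K c th u v : (forall x, 0 <= J x) ->
  Rabs (gg J M K c th u v) <= Bc K c * J (vsub u v).
Proof.
  intros HJ. unfold gg. pose proof (Bc_pos K c). pose proof (HJ (vsub u v)).
  destruct (veqb v u). rewrite Rabs_R0. nra.
  pose proof (wt_bound M v). set (wv := if inLam M v then / 2 else 1) in *.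
  rewrite !Rabs_mult, (Rabs_right (J _)), (Rabs_right wv) by lra.
  pose proof (trig_bound K c (th u - th v)). pose proof (Rabs_pos (trigpoly K c (th u - th v))).
  assert (wv * Rabs (trigpoly K c (th u - th v)) <= Bc K c) by nra. nra.
Qed.

Lemma gg_diff J M K c th w t1 t2 u v : (forall x, 0 <= J x) ->
  Rabs (gg J M K c (update th w t1) u v - gg J M K c (update th w t2) u v)
    <= (Lc K c * (2 * Rabs (t1 - t2))) * J (vsub u v).
Proof.
  intros HJ. unfold gg. pose proof (Lc_pos K c). pose proof (HJ (vsub u v)). pose proof (Rabs_pos (t1 - t2)).
  destruct (veqb v u). rewrite Rminus_diag, Rabs_R0. apply Rmult_le_pos; [apply Rmult_le_pos|]; lra.
  pose proof (wt_bound M v).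
  set (wv := if inLam M v then / 2 else 1) in *.
  replace (wv * J (vsub u v) * trigpoly K c (update th w t1 u - update th w t1 v) -
     wv * J (vsub u v) * trigpoly K c (update th w t2 u - update th w t2 v))
   with (wv * J (vsub u v) * (trigpoly K c (update th w t1 u - update th w t1 v) -
     trigpoly K c (update th w t2 u - update th w t2 v))) by ring.
  rewrite !Rabs_mult, (Rabs_right (J _)), (Rabs_right wv) by lra.
  pose proof (trig_lip K c (update th w t1 u - update th w t1 v) (update th w t2 u - update th w t2 v)).
  assert (Rabs (update th w t1 u - update th w t1 v - (update th w t2 u - update th w t2 v)) <= 2 * Rabs (t1 - t2)).
  { replace (update th w t1 u - update th w t1 v - (update th w t2 u - update th w t2 v))
     with ((update th w t1 u - update th w t2 u) + - (update th w t1 v - update th w t2 v)) by ring.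
    eapply Rle_trans. apply Rabs_triang. rewrite Rabs_Ropp.
    pose proof (upd_diff th w t1 t2 u). pose proof (upd_diff th w t1 t2 v). lra. }
  set (d := Rabs (trigpoly K c _ - trigpoly K c _)) in *.
  assert (d <= Lc K c * (2 * Rabs (t1 - t2))) by nra.
  pose proof (Rabs_pos (trigpoly K c (update th w t1 u - update th w t1 v) -
     trigpoly K c (update th w t2 u - update th w t2 v))).
  assert (0 <= wv * J (vsub u v)) by nra.
  assert (wv * J (vsub u v) * d <= 1 * J (vsub u v) * (Lc K c * (2 * Rabs (t1 - t2)))).
  { apply Rmult_le_compat; try nra. unfold d; auto. }
  nra.
Qed.

Lemma Good_Hft J M K c : (forall x, 0 <= J x) -> Un_cv (fun n => lsum (box n) J) 1 ->
  Good (Hft J M K c).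
Proof.
  intros HJ Hcv. split.
  - exists (INR (length (box M)) * Bc K c). intros th. rewrite Hft_eq, <- lsum_const.
    eapply Rle_trans. apply lsum_abs. apply lsum_le. intros u Hu.
    apply (zsum_bound J M u _ (Bc K c)); auto using Bc_pos. intros; apply gg_bound; auto.
  - apply (Lip_UCc _ (INR (length (box M)) * (Lc K c * 2))). intros w th t1 t2.
    rewrite !Hft_eq, <- lsum_minus.
    replace (INR (length (box M)) * (Lc K c * 2) * Rabs (t1 - t2)) with
      (INR (length (box M)) * (Lc K c * (2 * Rabs (t1 - t2)))) by ring.
    rewrite <- lsum_const.
    eapply Rle_trans. apply lsum_abs. apply lsum_le. intros u Hu.
    apply (zsum_diff J M u _ _ (Bc K c) (Bc K c)); auto using Bc_pos.
    pose proof (Lc_pos K c); pose proof (Rabs_pos (t1 - t2)); nra.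
    1,2: intros; apply gg_bound; auto.
    intros; apply gg_diff; auto.
Qed.

Lemma exp_bound2 a : 0 <= a <= 1 -> exp a - 1 <= 2 * a.
Proof.
  intros Ha. destruct (Req_dec a 0) as [->|Hne]. rewrite exp_0; lra.
  set (h := fun t => (1 + t + t * t) * exp (- t)).
  set (h' := fun t => (t - t * t) * exp (- t)).
  assert (Hd : forall t, derivable_pt_lim h t (h' t)).
  { intros t. apply is_derive_Reals. unfold h, h'. auto_derive; auto. ring. }
  destruct (MVT_cor2 h h' 0 a ltac:(lra) (fun c _ => Hd c)) as [c [E Hc]].
  unfold h, h' in E. rewrite Ropp_0, exp_0 in E.
  assert (0 <= (c - c * c) * exp (- c)). { apply Rmult_le_pos. nra. left; apply exp_pos. }
  assert (H1 : 1 <= (1 + a + a * a) * exp (- a)) by nra.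
  assert (Ee : exp (- a) * exp a = 1) by (rewrite <- exp_plus; replace (- a + a) with 0 by ring; apply exp_0).
  pose proof (exp_pos a). nra.
Qed.

Lemma J_le1 (J : V -> R) d : (forall x, 0 <= J x) -> Un_cv (fun n => lsum (box n) J) 1 -> J d <= 1.
Proof.
  intros HJ Hcv. set (n := (Z.to_nat (Z.abs (fst d)) + Z.to_nat (Z.abs (snd d)))%nat).
  eapply Rle_trans; [|apply (Sn_le1 J HJ Hcv n)].
  replace (J d) with (lsum [d] J) by (unfold lsum; simpl; ring).
  apply lsum_le_incl; auto. constructor; [simpl; auto|constructor].
  intros z [<-|[]]. apply in_box. unfold n; lia.
Qed.

Lemma Good_lprod (J : V -> R) eps epsbar D : continuity epsbar ->
  (forall t, epsbar (t + 2 * PI) = epsbar t) -> (forall t, 0 <= epsbar t <= eps) ->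
  Good (fun th => lprod D (fun e => exp (J (vsub (fst e) (snd e)) * epsbar (th (fst e) - th (snd e))) - 1)).
Proof.
  intros Hc Hp Hb. induction D as [|e D IH]. exact (Good_const 1).
  apply (Good_mult (fun th => exp (J (vsub (fst e) (snd e)) * epsbar (th (fst e) - th (snd e))) - 1)); auto.
  apply Good_fac with (eps := eps); auto.
Qed.

Lemma lprod_nonneg (J : V -> R) epsbar D th : (forall x, 0 <= J x) -> (forall t, 0 <= epsbar t) ->
  0 <= lprod D (fun e => exp (J (vsub (fst e) (snd e)) * epsbar (th (fst e) - th (snd e))) - 1).
Proof.
  intros HJ He. induction D as [|e D IH]. unfold lprod; simpl; lra.
  unfold lprod in *; simpl. apply Rmult_le_pos; auto.
  pose proof (HJ (vsub (fst e) (snd e))). pose proof (He (th (fst e) - th (snd e))).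
  pose proof (exp_le' 0 (J (vsub (fst e) (snd e)) * epsbar (th (fst e) - th (snd e))) ltac:(nra)).
  rewrite exp_0 in *. lra.
Qed.

Theorem mainTheorem4
  (J : V -> R)
  (HJnn : forall x, 0 <= J x)
  (HJsym : forall x, J x = J (vopp x))
  (HJsum : Un_cv (fun n => lsum (box n) J) 1)
  (M : nat) (HM : (1 <= M)%nat)
  (thbar : V -> R) (Hthbar : forall y, 0 <= thbar y < 2 * PI)
  (K : nat) (c : nat -> R)
  (eps : R) (epsbar : R -> R)
  (Hepsbar_cont : continuity epsbar)
  (Hepsbar_per : forall t, epsbar (t + 2 * PI) = epsbar t)
  (Hepsbar_bd : forall t, 0 <= epsbar t <= eps)
  (Heps : 0 < eps <= 1)
  (D : list (V * V)) (HD : edge_set M D)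
  (x y : V) (He : is_edge M (x, y))
  (HeD : forall d, In d D -> ~ same_edge (x, y) d) :
  piA J M thbar K c epsbar ((x, y) :: D)
    <= 2 * eps * J (vsub x y) * piA J M thbar K c epsbar D.
Proof.
  set (P := fun th => lprod D (fun e => exp (J (vsub (fst e) (snd e)) * epsbar (th (fst e) - th (snd e))) - 1)).
  set (F2 := fun th => exp (Hft J M K c th) * P th).
  set (fe := fun th : V -> R => exp (J (vsub x y) * epsbar (th x - th y)) - 1).
  set (F1 := fun th => exp (Hft J M K c th) * (fe th * P th)).
  set (C := 2 * eps * J (vsub x y)).
  assert (GP : Good P) by (apply Good_lprod with (eps := eps); auto).
  assert (GH : Good (fun th => exp (Hft J M K c th))) by (apply Good_exp, Good_Hft; auto).
  assert (G2 : Good F2) by (apply Good_mult; auto).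
  assert (G1 : Good F1).
  { apply Good_mult; auto. apply Good_mult; auto. apply Good_fac with (eps := eps); auto. }
  assert (GC2 : Good (fun th => C * F2 th)) by (apply (Good_mult (fun _ => C)); auto using Good_const).
  assert (HJe : J (vsub x y) <= 1) by (apply J_le1; auto).
  assert (Hfe : forall th, 0 <= fe th <= C).
  { intros th. unfold fe, C. pose proof (HJnn (vsub x y)). pose proof (Hepsbar_bd (th x - th y)).
    split.
    - pose proof (exp_le' 0 (J (vsub x y) * epsbar (th x - th y)) ltac:(nra)). rewrite exp_0 in *. lra.
    - pose proof (exp_le' (J (vsub x y) * epsbar (th x - th y)) (J (vsub x y) * eps) ltac:(nra)).
      pose proof (exp_bound2 (J (vsub x y) * eps) ltac:(nra)). lra. }
  assert (Hpt : forall th, F1 th <= C * F2 th).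
  { intros th. unfold F1, F2. pose proof (exp_pos (Hft J M K c th)).
    assert (0 <= P th) by (apply lprod_nonneg; auto; intros; apply Hepsbar_bd).
    specialize (Hfe th). set (E := exp (Hft J M K c th)) in *.
    assert (0 <= E * P th) by nra. nra. }
  assert (HZ1 : ZA J M thbar K c epsbar ((x, y) :: D) = iint (box M) F1 thbar) by reflexivity.
  assert (HZ2 : ZA J M thbar K c epsbar D = iint (box M) F2 thbar) by reflexivity.
  assert (Hle : iint (box M) F1 thbar <= C * iint (box M) F2 thbar).
  { rewrite <- iint_scal by (destruct G2; auto).
    apply iint_mono; [destruct G1|destruct GC2|]; auto. }
  assert (HZ : 0 <= Zpart J M thbar K c epsbar).
  { unfold Zpart, integrate. apply iint_ge0. intros; left; apply exp_pos. }
  assert (HZi : 0 <= / Zpart J M thbar K c epsbar).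
  { destruct HZ as [HZ|HZ]. left; apply Rinv_0_lt_compat; auto. rewrite <- HZ, Rinv_0; lra. }
  unfold piA, Rdiv. fold C. rewrite HZ1, HZ2.
  rewrite <- Rmult_assoc. apply Rmult_le_compat_r; auto.
Qed.
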